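(* Let $\mathcal A=(S,R_0)$ be an argumentation network with joint attacks, where $S\neq\varnothing$ and $R_0\subseteq(2^S\setminus\{\varnothing\})\times S$. Then there exists a legitimate Caminada–Gabbay labelling $\lambda$ of $\mathcal A$ (i.e. $\mathcal A$ has complete extensions).
   Context: A legitimate Caminada–Gabbay labelling of $(S,R_0)$ is $\lambda:S\to\{\mathrm{in},\mathrm{out},\mathrm{und}\}$ such that for each $x\in S$: (CG1) $\lambda(x)=\mathrm{in}$ iff either $x$ is attacked by no $G$, or for every $G$ with $GR_0x$ there is $y\in G$ with $\lambda(y)=\mathrm{out}$; (CG2) $\lambda(x)=\mathrm{out}$ iff for some $G$ with $GR_0x$, all $y\in G$ have $\lambda(y)=\mathrm{in}$; (CG3) $\lambda(x)=\mathrm{und}$ iff for every $G$ with $GR_0x$ there is $y\in G$ with $\lambda(y)\neq\mathrm{in}$, and for some $G'$ with $G'R_0x$ every $y\in G'$ has $\lambda(y)\in\{\mathrm{in},\mathrm{und}\}$. Complete extensions are identified with legitimate Caminada–Gabbay labellings. *)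

(* Defs.v *)
Inductive label : Type := lin | lout | lund.

(* An argumentation network with joint attacks on a carrier type S:
   R0 G x means the (nonempty) set G of arguments jointly attacks x.
   Sets of arguments are predicates S -> Prop. *)
Definition joint_attack_network (S : Type) (R0 : (S -> Prop) -> S -> Prop) : Prop :=
  (exists x : S, True) /\
  (forall G x, R0 G x -> exists y, G y).

Definition legitimate_CG_labelling (S : Type) (R0 : (S -> Prop) -> S -> Prop)
  (lam : S -> label) : Prop :=
  forall x : S,
    (lam x = lin <->
      ((forall G, ~ R0 G x) \/
       (forall G, R0 G x -> exists y, G y /\ lam y = lout))) /\
    (lam x = lout <->
      (exists G, R0 G x /\ forall y, G y -> lam y = lin)) /\
    (lam x = lund <->
      ((forall G, R0 G x -> exists y, G y /\ lam y <> lin) /\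
       (exists G', R0 G' x /\ forall y, G' y -> (lam y = lin \/ lam y = lund)))).

(* Main.v *)
Require Import Defs.
From Stdlib Require Import Classical ClassicalDescription.

Section G.
Variable S : Type.
Variable R0 : (S -> Prop) -> S -> Prop.

Definition Fin (O : S -> Prop) x := forall G, R0 G x -> exists y, G y /\ O y.
Definition Fout (I : S -> Prop) x := exists G, R0 G x /\ forall y, G y -> I y.
Definition Pre (I O : S -> Prop) :=
  (forall x, Fin O x -> I x) /\ (forall x, Fout I x -> O x).
Definition Inx x := forall I O, Pre I O -> I x.
Definition Outx x := forall I O, Pre I O -> O x.

Lemma Fin_mono (O O' : S -> Prop) x : (forall y, O y -> O' y) -> Fin O x -> Fin O' x.
Proof. intros H F G HG. destruct (F G HG) as [y [? ?]]. eauto. Qed.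
Lemma Fout_mono (I I' : S -> Prop) x : (forall y, I y -> I' y) -> Fout I x -> Fout I' x.
Proof. intros H [G [HG F]]. exists G; split; auto. Qed.

Lemma pre_star : Pre Inx Outx.
Proof.
  split; intros x F I O HP.
  - apply (proj1 HP). apply (Fin_mono Outx); auto. intros y Hy; exact (Hy I O HP).
  - apply (proj2 HP). apply (Fout_mono Inx); auto. intros y Hy; exact (Hy I O HP).
Qed.

Lemma post_star : (forall x, Inx x -> Fin Outx x) /\ (forall x, Outx x -> Fout Inx x).
Proof.
  assert (HP : Pre (fun x => Inx x /\ Fin Outx x) (fun x => Outx x /\ Fout Inx x)).
  { split; intros x F.
    - assert (Fin Outx x) by (refine (Fin_mono _ Outx x _ F); intros; tauto).
      split; [apply pre_star|]; auto.
    - assert (Fout Inx x) by (refine (Fout_mono _ Inx x _ F); intros; tauto).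
      split; [apply pre_star|]; auto. }
  split; intros x H; apply (H _ _ HP).
Qed.

Lemma disj : forall x, Inx x -> ~ Outx x.
Proof.
  assert (HP : Pre (fun x => Inx x /\ ~ Outx x) (fun x => Outx x /\ ~ Inx x)).
  { split; intros x F.
    - assert (Fin Outx x) by (refine (Fin_mono _ Outx x _ F); intros; tauto).
      split; [apply pre_star; auto|]. intros Ho.
      destruct (proj2 post_star x Ho) as [G [HG HI]].
      destruct (F G HG) as [y [Gy [_ Hn]]]. apply Hn; auto.
    - assert (Fout Inx x) by (refine (Fout_mono _ Inx x _ F); intros; tauto).
      split; [apply pre_star; auto|]. intros Hi.
      destruct F as [G [HG HI]].
      destruct (proj1 post_star x Hi G HG) as [y [Gy Ho]].
      apply (HI y Gy); auto. }
  intros x H1 H2. exact (proj2 (H1 _ _ HP) H2).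
Qed.

Definition lam (x : S) : label :=
  if excluded_middle_informative (Inx x) then lin
  else if excluded_middle_informative (Outx x) then lout else lund.

Lemma lam_in x : lam x = lin <-> Inx x.
Proof.
  unfold lam; destruct (excluded_middle_informative (Inx x)); [tauto|].
  destruct (excluded_middle_informative (Outx x)); split; intros; try discriminate; tauto.
Qed.
Lemma lam_out x : lam x = lout <-> Outx x.
Proof.
  unfold lam; destruct (excluded_middle_informative (Inx x)).
  - split; intros; try discriminate. exfalso; eapply disj; eauto.
  - destruct (excluded_middle_informative (Outx x)); split; intros; try discriminate; tauto.
Qed.

Lemma Fin_iff x : Inx x <-> Fin Outx x.
Proof. split; [apply post_star|apply pre_star]. Qed.
Lemma Fout_iff x : Outx x <-> Fout Inx x.
Proof. split; [apply post_star|apply pre_star]. Qed.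

End G.

Theorem theorem21 (S : Type) (R0 : (S -> Prop) -> S -> Prop)
  (HA : joint_attack_network S R0) :
  exists lam : S -> label, legitimate_CG_labelling S R0 lam.
Proof.
  exists (lam S R0). intros x.
  assert (Hin : forall y, lam S R0 y = lin <-> Inx S R0 y) by apply lam_in.
  assert (Hout : forall y, lam S R0 y = lout <-> Outx S R0 y) by apply lam_out.
  assert (A : lam S R0 x = lin <-> Fin S R0 (fun y => lam S R0 y = lout) x).
  { rewrite Hin, Fin_iff. unfold Fin. split; intros H G HG;
    destruct (H G HG) as [y [? ?]]; exists y; split; auto; apply Hout; auto. }
  assert (B : lam S R0 x = lout <-> Fout S R0 (fun y => lam S R0 y = lin) x).
  { rewrite Hout, Fout_iff. unfold Fout. split; intros [G [HG H]]; exists G;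
    split; auto; intros y Gy; apply Hin; auto. }
  split; [|split].
  - rewrite A. unfold Fin. split; [tauto|].
    intros [H|H]; auto. intros G HG; exfalso; exact (H G HG).
  - exact B.
  - unfold Fin, Fout in *. split.
    + intros E. split.
      * intros G HG. apply NNPP; intro N.
        assert (lam S R0 x = lout) as E2.
        { apply B. exists G; split; auto. intros y Gy. apply NNPP; intro N2.
          apply N; exists y; auto. }
        congruence.
      * apply NNPP; intro N.
        assert (lam S R0 x = lin) as E2.
        { apply A. intros G HG. apply NNPP; intro N2. apply N. exists G; split; auto.
          intros y Gy. destruct (lam S R0 y) eqn:Ey; auto.
          exfalso; apply N2; exists y; auto. }
        congruence.
    + intros [H1 [G [HG H2]]]. destruct (lam S R0 x) eqn:E; auto.
      * destruct (proj1 A eq_refl G HG) as [y [Gy Hy]].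
        destruct (H2 y Gy); congruence.
      * destruct (proj1 B eq_refl) as [G1 [HG1 H3]].
        destruct (H1 G1 HG1) as [y [Gy Hy]]. exfalso; auto.
Qed.
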